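(* Let $n\ge 2$ be an integer, $k,c_b>0$, $\rho_0>0$, and let $\lambda_{1,0}\le\cdots\le\lambda_{n,0}$ be real numbers. Consider the system $$\lambda_i'=-\lambda_i^2+\frac{k}{n}(\rho-c_b)\ (i=1,\dots,n),\qquad \rho'=-\rho\lambda,\quad \lambda=\sum_{i=1}^n\lambda_i,\qquad \rho(0)=\rho_0,\ \lambda_i(0)=\lambda_{i,0},$$ and suppose its maximal interval of existence is $[0,t_B)$ with $0<t_B<\infty$. Then $\lim_{t\to t_B^-}\int_0^t\rho(s)\,ds=\infty$.
   Context: Solutions are real-valued and continuously differentiable on $[0,t_B)$. *)

(* Defs.v *)
From Stdlib Require Import Reals.
From Coquelicot Require Import Coquelicot.
Open Scope R_scope.

Fixpoint sumR (f : nat -> R) (n : nat) : R :=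
  match n with
  | O => 0
  | S m => sumR f m + f m
  end.

(* (lam_0,...,lam_{n-1}, rho) is a solution of
     lam_i' = - lam_i^2 + (k/n)(rho - cb),  rho' = - rho * sum_i lam_i,
     rho(0) = rho0, lam_i(0) = lam0 i
   on the interval [0,T): continuous (from the right) at 0, and
   differentiable satisfying the ODE on (0,T).  (Together with the ODE this
   is the same as a C^1 solution on [0,T) with one-sided derivative at 0.) *)
Definition is_sol (n : nat) (k cb rho0 : R) (lam0 : nat -> R) (T : R)
    (lam : nat -> R -> R) (rho : R -> R) : Prop :=
  rho 0 = rho0 /\
  (forall i, (i < n)%nat -> lam i 0 = lam0 i) /\
  filterlim rho (at_right 0) (locally (rho 0)) /\
  (forall i, (i < n)%nat -> filterlim (lam i) (at_right 0) (locally (lam i 0))) /\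
  (forall t, 0 < t < T ->
     (forall i, (i < n)%nat ->
        is_derive (lam i) t (- (lam i t) ^ 2 + k / INR n * (rho t - cb))) /\
     is_derive rho t (- rho t * sumR (fun i => lam i t) n)).

Definition maximal_sol (n : nat) (k cb rho0 : R) (lam0 : nat -> R) (tB : R)
    (lam : nat -> R -> R) (rho : R -> R) : Prop :=
  is_sol n k cb rho0 lam0 tB lam rho /\
  forall T (lam' : nat -> R -> R) (rho' : R -> R),
    tB < T -> is_sol n k cb rho0 lam0 T lam' rho' ->
    ~ (forall t, 0 <= t < tB ->
         rho' t = rho t /\ forall i, (i < n)%nat -> lam' i t = lam i t).

(* Main.v *)
Require Import Defs.
From Stdlib Require Import Reals Lra Lia ZArith Classical.
From Coquelicot Require Import Coquelicot.
Open Scope R_scope.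

Lemma ballR (x e y : R) : ball x e y <-> Rabs (y - x) < e.
Proof. split; intro H; exact H. Qed.

Lemma cont_eps (f : R -> R) x :
  (forall e, 0 < e -> exists d, 0 < d /\ forall y, Rabs (y - x) < d -> Rabs (f y - f x) < e) ->
  continuous f x.
Proof.
  intros H. apply (proj2 (filterlim_locally f (f x))). intros eps.
  destruct (H eps (cond_pos eps)) as [d [Hd Hy]].
  exists (mkposreal d Hd). intros y Hb. apply ballR. apply Hy. apply ballR in Hb. exact Hb.
Qed.

Lemma cont_lip (f : R -> R) x K :
  (forall y, Rabs (f y - f x) <= K * Rabs (y - x)) -> continuous f x.
Proof.
  intros H. apply cont_eps. intros e He.
  exists (e / (Rabs K + 1)). split.
  { apply Rdiv_lt_0_compat; [lra| pose proof (Rabs_pos K); lra]. }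
  intros y Hy. eapply Rle_lt_trans. apply H.
  apply Rle_lt_trans with (Rabs K * Rabs (y - x)).
  { apply Rmult_le_compat_r. apply Rabs_pos. apply RRle_abs. }
  pose proof (Rabs_pos K). pose proof (Rabs_pos (y - x)).
  apply Rle_lt_trans with ((Rabs K + 1) * Rabs (y - x)). nra.
  replace e with ((Rabs K + 1) * (e / (Rabs K + 1))) by (field; lra).
  apply Rmult_lt_compat_l; lra.
Qed.

Lemma deriv_cont (f : R -> R) (x l : R) : is_derive f x l -> continuous f x.
Proof. intros H. apply (@ex_derive_continuous R_AbsRing R_NormedModule). exists l. exact H. Qed.

Lemma mv (f df : R -> R) p q a b :
  (forall x, p < x < q -> is_derive f x (df x)) -> p < a -> a <= b -> b < q ->
  exists c, a <= c <= b /\ f b - f a = df c * (b - a).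
Proof.
  intros Hd Hpa Hab Hbq.
  destruct (MVT_gen f a b df) as [c [Hc E]].
  - intros x Hx. apply Hd. rewrite Rmin_left in Hx by lra. rewrite Rmax_right in Hx by lra. lra.
  - intros x Hx. rewrite Rmin_left in Hx by lra. rewrite Rmax_right in Hx by lra.
    apply continuity_pt_filterlim. apply (deriv_cont f x (df x)). apply Hd. lra.
  - exists c. rewrite Rmin_left in Hc by lra. rewrite Rmax_right in Hc by lra. split; auto.
Qed.

Lemma mono_up (f df : R -> R) p q a b :
  (forall x, p < x < q -> is_derive f x (df x)) -> (forall x, p < x < q -> 0 <= df x) ->
  p < a -> a <= b -> b < q -> f a <= f b.
Proof.
  intros Hd Hpos Hpa Hab Hbq. destruct (mv f df p q a b Hd Hpa Hab Hbq) as [c [Hc E]].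
  assert (0 <= df c) by (apply Hpos; lra). nra.
Qed.

Lemma mono_down (f df : R -> R) p q a b :
  (forall x, p < x < q -> is_derive f x (df x)) -> (forall x, p < x < q -> df x <= 0) ->
  p < a -> a <= b -> b < q -> f b <= f a.
Proof.
  intros Hd Hpos Hpa Hab Hbq. destruct (mv f df p q a b Hd Hpa Hab Hbq) as [c [Hc E]].
  assert (df c <= 0) by (apply Hpos; lra). nra.
Qed.

Lemma const_d0 (f : R -> R) p q a b :
  (forall x, p < x < q -> is_derive f x 0) -> p < a < q -> p < b < q -> f a = f b.
Proof.
  intros Hd Ha Hb.
  destruct (Rle_dec a b).
  - destruct (mv f (fun _ => 0) p q a b Hd) as [c [_ E]]; lra.
  - destruct (mv f (fun _ => 0) p q b a Hd) as [c [_ E]]; lra.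
Qed.

Lemma D_RInt (g : R -> R) p q a t :
  (forall x, p < x < q -> continuous g x) -> p < a < q -> p < t < q ->
  is_derive (fun x => RInt g a x) t (g t).
Proof.
  intros Hc Ha Ht. apply (is_derive_RInt g (fun x => RInt g a x) a t).
  - assert (Hd : 0 < Rmin (t - p) (q - t)) by (apply Rmin_glb_lt; lra).
    exists (mkposreal _ Hd). intros y Hy. apply ballR in Hy. simpl in Hy.
    assert (Hy1 : Rabs (y - t) < t - p) by (eapply Rlt_le_trans; [exact Hy| apply Rmin_l]).
    assert (Hy2 : Rabs (y - t) < q - t) by (eapply Rlt_le_trans; [exact Hy| apply Rmin_r]).
    apply Rabs_def2 in Hy1. apply Rabs_def2 in Hy2.
    apply (@RInt_correct R_CompleteNormedModule). apply (@ex_RInt_continuous R_CompleteNormedModule). intros z Hz. apply Hc.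
    split.
    + eapply Rlt_le_trans; [|apply Hz]. apply Rmin_glb_lt; lra.
    + eapply Rle_lt_trans; [apply Hz|]. apply Rmax_lub_lt; lra.
  - apply Hc. lra.
Qed.

Lemma sumR_ext f g N : (forall i, (i < N)%nat -> f i = g i) -> sumR f N = sumR g N.
Proof. induction N; simpl; intros H; auto. rewrite IHN by (intros; apply H; lia). rewrite H by lia. auto. Qed.

Lemma sumR_le f g N : (forall i, (i < N)%nat -> f i <= g i) -> sumR f N <= sumR g N.
Proof. induction N; simpl; intros H; [lra|]. assert (f N <= g N) by (apply H; lia).
  assert (sumR f N <= sumR g N) by (apply IHN; intros; apply H; lia). lra. Qed.

Lemma sumR_const c N : sumR (fun _ => c) N = INR N * c.
Proof. induction N; simpl sumR; [simpl; lra|]. rewrite IHN, S_INR. lra. Qed.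

Lemma sumR_nonneg f N : (forall i, (i < N)%nat -> 0 <= f i) -> 0 <= sumR f N.
Proof. intros H. rewrite <- (Rmult_0_r (INR N)), <- sumR_const. apply sumR_le. auto. Qed.

Lemma sumR_minus f g N : sumR (fun i => f i - g i) N = sumR f N - sumR g N.
Proof. induction N; simpl; [lra|]. rewrite IHN. lra. Qed.

Lemma sumR_abs f N : Rabs (sumR f N) <= sumR (fun i => Rabs (f i)) N.
Proof. induction N; simpl. rewrite Rabs_R0; lra.
  eapply Rle_trans. apply Rabs_triang. lra. Qed.

Lemma sumR_term f N j : (forall i, (i < N)%nat -> 0 <= f i) -> (j < N)%nat -> f j <= sumR f N.
Proof. induction N; intros H Hj; [lia|]. simpl.
  destruct (Nat.eq_dec j N) as [->|Hne].
  - assert (0 <= sumR f N) by (apply sumR_nonneg; intros; apply H; lia). lra.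
  - assert (f j <= sumR f N) by (apply IHN; [intros; apply H; lia| lia]).
    assert (0 <= f N) by (apply H; lia). lra. Qed.

Lemma pow2_ge m : INR m <= 2 ^ m.
Proof. induction m; simpl pow. simpl; lra. rewrite S_INR.
  assert (1 <= 2 ^ m) by (apply pow_R1_Rle; lra). lra. Qed.

Lemma pow2_pos m : 0 < 2 ^ m.
Proof. apply pow_lt; lra. Qed.

Lemma small_le z K : (forall m, z <= K / 2 ^ m) -> z <= 0.
Proof.
  intros H. destruct (Rle_dec z 0) as [|Hz]; auto. exfalso. apply Rnot_le_lt in Hz.
  destruct (archimed (Rabs K / z)) as [Hu _].
  set (m := Z.to_nat (up (Rabs K / z))).
  assert (Hm : Rabs K / z < INR m).
  { unfold m. rewrite INR_IZR_INZ. rewrite Z2Nat.id. auto.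
    apply le_IZR. assert (0 <= Rabs K / z) by (apply Rdiv_le_0_compat; [apply Rabs_pos|lra]). simpl. lra. }
  specialize (H m). pose proof (pow2_ge m). pose proof (pow2_pos m).
  assert (z * 2 ^ m <= K). { apply (Rmult_le_compat_r (2^m)) in H; [|lra].
    unfold Rdiv in H. rewrite Rmult_assoc, Rinv_l in H by lra. lra. }
  assert (Rabs K < z * INR m). { apply (Rmult_lt_compat_l z) in Hm; [|lra].
    unfold Rdiv in Hm. rewrite <- Rmult_assoc, (Rmult_comm z), Rmult_assoc, Rinv_r in Hm by lra. lra. }
  pose proof (RRle_abs K). nra.
Qed.

Lemma small_eq z K : (forall m, Rabs z <= K / 2 ^ m) -> z = 0.
Proof. intros H. assert (Rabs z <= 0) by (apply (small_le _ K); auto).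
  pose proof (Rabs_pos z). assert (Rabs z = 0) by lra. apply Rabs_eq_0; auto. Qed.

Lemma small_le' z r K : (forall m, z <= r + K / 2 ^ m) -> z <= r.
Proof. intros H. assert (z - r <= 0). apply (small_le _ K). intros m. specialize (H m). lra. lra. Qed.

Lemma pow2S m : 2 ^ S m = 2 * 2 ^ m.
Proof. reflexivity. Qed.

Lemma RInt_bound (g : R -> R) u v K :
  ex_RInt g u v -> (forall x, Rmin u v <= x <= Rmax u v -> Rabs (g x) <= K) ->
  Rabs (RInt g u v) <= K * Rabs (v - u).
Proof.
  intros He Hb. destruct (Rle_dec u v).
  - rewrite Rmin_left, Rmax_right in Hb by lra. rewrite (Rabs_right (v - u)) by lra.
    rewrite Rmult_comm. apply abs_RInt_le_const; auto.
  - rewrite Rmin_right, Rmax_left in Hb by lra.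
    rewrite <- (opp_RInt_swap g v u) by (apply ex_RInt_swap; auto).
    rewrite (Rabs_left (v - u)) by lra. unfold opp; simpl. rewrite Rabs_Ropp.
    replace (- (v - u)) with (u - v) by lra. rewrite Rmult_comm.
    apply abs_RInt_le_const; auto. lra. apply ex_RInt_swap; auto.
Qed.

Lemma cont_ex_RInt (g : R -> R) u v : (forall x, continuous g x) -> ex_RInt g u v.
Proof. intros H. apply (@ex_RInt_continuous R_CompleteNormedModule). intros; apply H. Qed.

Lemma small_exists K eps : 0 < eps -> exists m, K / 2 ^ m < eps.
Proof.
  intros He. destruct (Rlt_dec (K / 2 ^ 0) eps) as [H|H]. exists O; auto.
  destruct (Rle_dec K 0). { exists O. simpl. unfold Rdiv. rewrite Rinv_1. lra. }
  destruct (archimed (K / eps)) as [Hu _].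
  set (m := Z.to_nat (up (K / eps))).
  assert (Hm : K / eps < INR m).
  { unfold m. rewrite INR_IZR_INZ. rewrite Z2Nat.id. auto.
    apply le_IZR. assert (0 <= K / eps) by (apply Rdiv_le_0_compat; lra). simpl. lra. }
  exists m. pose proof (pow2_ge m). pose proof (pow2_pos m).
  apply (Rmult_lt_reg_r (2 ^ m)); auto. unfold Rdiv. rewrite Rmult_assoc, Rinv_l by lra.
  apply (Rmult_lt_compat_l eps) in Hm; auto. unfold Rdiv in Hm.
  rewrite <- Rmult_assoc, (Rmult_comm eps), Rmult_assoc, Rinv_r in Hm by lra. nra.
Qed.

Lemma lim_close (u : nat -> R) (l : R) m K :
  is_lim_seq u l -> (forall p, Rabs (u (p + m)%nat - u m) <= K) -> Rabs (l - u m) <= K.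
Proof.
  intros Hl Hb. apply is_lim_seq_incr_n with (N := m) in Hl.
  assert (H1 : Rbar_le l (u m + K)).
  { apply (is_lim_seq_le (fun n => u (n + m)%nat) (fun _ => u m + K) l (u m + K)); auto.
    intros p. specialize (Hb p). apply Rabs_le_between in Hb. lra. apply is_lim_seq_const. }
  assert (H2 : Rbar_le (u m - K) l).
  { apply (is_lim_seq_le (fun _ => u m - K) (fun n => u (n + m)%nat) (u m - K) l); auto.
    intros p. specialize (Hb p). apply Rabs_le_between in Hb. lra. apply is_lim_seq_const. }
  simpl in H1, H2. apply Rabs_le. lra.
Qed.

Definition clampf t0 h t := Rmax (t0 - h) (Rmin (t0 + h) t).

Lemma clamp_in t0 h t : 0 <= h -> Rabs (clampf t0 h t - t0) <= h.
Proof. intros Hh. unfold clampf, Rmax, Rmin. repeat destruct Rle_dec; apply Rabs_le; lra. Qed.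

Lemma clamp_lip t0 h t s : 0 <= h -> Rabs (clampf t0 h t - clampf t0 h s) <= Rabs (t - s).
Proof. intros Hh. unfold clampf.
  unfold Rmax, Rmin; repeat destruct Rle_dec; apply Rabs_le; pose proof (Rle_abs (t - s));
  pose proof (Rle_abs (-(t - s))); rewrite Rabs_Ropp in *; lra. Qed.

Lemma clamp_id t0 h t : Rabs (t - t0) <= h -> clampf t0 h t = t.
Proof. intros H. apply Rabs_le_between in H. unfold clampf.
  rewrite Rmin_right by lra. rewrite Rmax_right by lra. auto. Qed.

Definition boxd N (a : nat -> R) r (x : nat -> R) := forall j, (j < N)%nat -> Rabs (x j - a j) <= r.
Definition Fbnd N a r M (F : (nat -> R) -> nat -> R) :=
  forall x, boxd N a r x -> forall j, (j < N)%nat -> Rabs (F x j) <= M.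
Definition Flip N a r L (F : (nat -> R) -> nat -> R) :=
  forall x y, boxd N a r x -> boxd N a r y -> forall j, (j < N)%nat ->
    Rabs (F x j - F y j) <= L * sumR (fun l => Rabs (x l - y l)) N.
Definition Good N a r M (X : R -> nat -> R) :=
  (forall t, boxd N a r (X t)) /\
  (forall t s j, (j < N)%nat -> Rabs (X t j - X s j) <= M * Rabs (t - s)).

Fixpoint pic (F : (nat -> R) -> nat -> R) (a : nat -> R) t0 h (m : nat) : R -> nat -> R :=
  match m with
  | O => fun _ => a
  | S m' => fun t j => a j + RInt (fun s => F (pic F a t0 h m' s) j) t0 (clampf t0 h t)
  end.

Lemma Fcont N a r M L F X j s : 0 <= L -> Flip N a r L F -> Good N a r M X -> (j < N)%nat ->
  continuous (fun s => F (X s) j) s.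
Proof.
  intros HL Hl [Hb Hx] Hj. apply (cont_lip _ _ (L * (INR N * M))). intros y.
  eapply Rle_trans. apply Hl; auto.
  rewrite Rmult_assoc. apply Rmult_le_compat_l; auto.
  eapply Rle_trans. apply (sumR_le _ (fun _ => M * Rabs (y - s))). intros; apply Hx; auto.
  rewrite sumR_const. lra.
Qed.

Lemma Fint N a r M L F X j u v : 0 <= L -> Flip N a r L F -> Good N a r M X -> (j < N)%nat ->
  ex_RInt (fun s => F (X s) j) u v.
Proof. intros. apply cont_ex_RInt. intros; eapply Fcont; eauto. Qed.

Lemma good_step N a r M L F t0 h X :
  0 <= h -> 0 <= M -> 0 <= L -> M * h <= r -> Fbnd N a r M F -> Flip N a r L F ->
  Good N a r M X ->
  Good N a r M (fun t j => a j + RInt (fun s => F (X s) j) t0 (clampf t0 h t)).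
Proof.
  intros Hh HM HL HMh Hb Hl HG. pose proof HG as [HGb HGx]. split.
  - intros t j Hj. assert (Q : forall x y : R, x + y - x = y) by (intros; ring). rewrite Q.
    eapply Rle_trans. apply RInt_bound with (K := M). eapply Fint; eauto.
    intros; apply Hb; auto.
    pose proof (clamp_in t0 h t Hh). eapply Rle_trans; [|exact HMh].
    apply Rmult_le_compat_l; auto.
  - intros t s j Hj.
    rewrite <- (RInt_Chasles (V:=R_CompleteNormedModule) (fun s => F (X s) j) t0 (clampf t0 h s) (clampf t0 h t))
      by (eapply Fint; eauto).
    unfold plus; simpl.
    assert (Q : forall x y z : R, x + (y + z) - (x + y) = z) by (intros; ring). rewrite Q.
    eapply Rle_trans. apply RInt_bound with (K := M). eapply Fint; eauto.
    intros; apply Hb; auto. apply Rmult_le_compat_l; auto.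
    apply clamp_lip; auto.
Qed.

Lemma good_pic N a r M L F t0 h m :
  0 < r -> 0 <= h -> 0 <= M -> 0 <= L -> M * h <= r -> Fbnd N a r M F -> Flip N a r L F ->
  Good N a r M (pic F a t0 h m).
Proof.
  intros Hr Hh HM HL HMh Hb Hl. induction m.
  - split. intros t j Hj. simpl. rewrite Rminus_diag, Rabs_R0. lra.
    intros t s j Hj. simpl. rewrite Rminus_diag, Rabs_R0. pose proof (Rabs_pos (t - s)). nra.
  - simpl. eapply good_step; eauto.
Qed.

Lemma RInt_minusR (f g : R -> R) u v : ex_RInt f u v -> ex_RInt g u v ->
  RInt f u v - RInt g u v = RInt (fun s => f s - g s) u v.
Proof. intros. symmetry. apply (RInt_minus (V:=R_CompleteNormedModule)); auto. Qed.

Lemma pic_diff N a r M L F t0 h :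
  0 < r -> 0 <= h -> 0 <= M -> 0 <= L -> M * h <= r -> INR N * L * h <= / 2 ->
  Fbnd N a r M F -> Flip N a r L F ->
  forall m t, sumR (fun j => Rabs (pic F a t0 h (S m) t j - pic F a t0 h m t j)) N <= INR N * r / 2 ^ m.
Proof.
  intros Hr Hh HM HL HMh HNL Hb Hl. induction m; intros t.
  - simpl pow. unfold Rdiv. rewrite Rinv_1, Rmult_1_r. rewrite <- sumR_const.
    apply sumR_le. intros j Hj. destruct (good_pic N a r M L F t0 h 1 Hr Hh HM HL HMh Hb Hl) as [Hg _].
    apply Hg; auto.
  - pose proof (good_pic N a r M L F t0 h (S m) Hr Hh HM HL HMh Hb Hl) as G1.
    pose proof (good_pic N a r M L F t0 h m Hr Hh HM HL HMh Hb Hl) as G0.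
    apply Rle_trans with (sumR (fun _ => L * (INR N * r / 2 ^ m) * h) N).
    + apply sumR_le. intros j Hj.
      change (pic F a t0 h (S (S m)) t j) with
        (a j + RInt (fun s => F (pic F a t0 h (S m) s) j) t0 (clampf t0 h t)).
      change (pic F a t0 h (S m) t j) with
        (a j + RInt (fun s => F (pic F a t0 h m s) j) t0 (clampf t0 h t)).
      assert (Q : forall x y z : R, x + y - (x + z) = y - z) by (intros; ring). rewrite Q.
      rewrite RInt_minusR by (apply (Fint N a r M L F); auto).
      eapply Rle_trans. apply RInt_bound with (K := L * (INR N * r / 2 ^ m)).
      apply (@ex_RInt_minus R_CompleteNormedModule); apply (Fint N a r M L F); auto.
      intros x _. eapply Rle_trans. apply Hl. apply G1. apply G0. auto.
      apply Rmult_le_compat_l; auto.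
      apply Rmult_le_compat_l. pose proof (pow2_pos m). apply Rmult_le_pos; auto.
      apply Rdiv_le_0_compat; [apply Rmult_le_pos; [apply pos_INR|lra]|lra].
      apply clamp_in; auto.
    + rewrite sumR_const. rewrite pow2S. pose proof (pow2_pos m). pose proof (pos_INR N).
      unfold Rdiv. rewrite Rinv_mult.
      assert (0 <= INR N * r * / 2 ^ m) by (apply Rmult_le_pos; [nra| left; apply Rinv_0_lt_compat; lra]).
      replace (INR N * (L * (INR N * r * / 2 ^ m) * h)) with ((INR N * L * h) * (INR N * r * / 2 ^ m)) by ring.
      replace (INR N * r * (/ 2 * / 2 ^ m)) with (/2 * (INR N * r * / 2 ^ m)) by ring.
      apply Rmult_le_compat_r; auto.
Qed.

Lemma pic_cauchy N a r M L F t0 h :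
  0 < r -> 0 <= h -> 0 <= M -> 0 <= L -> M * h <= r -> INR N * L * h <= / 2 ->
  Fbnd N a r M F -> Flip N a r L F ->
  forall m p t j, (j < N)%nat ->
  Rabs (pic F a t0 h (p + m) t j - pic F a t0 h m t j) <= 2 * (INR N * r / 2 ^ m) * (1 - / 2 ^ p).
Proof.
  intros Hr Hh HM HL HMh HNL Hb Hl m p t j Hj. induction p.
  - simpl. rewrite Rminus_diag, Rabs_R0, Rinv_1. lra.
  - change (S p + m)%nat with (S (p + m)). change (2 ^ S p) with (2 * 2 ^ p).
    assert (H1 : Rabs (pic F a t0 h (S (p + m)) t j - pic F a t0 h (p + m) t j) <= INR N * r / 2 ^ (p + m)).
    { eapply Rle_trans; [|apply (pic_diff N a r M L F t0 h); auto].
      apply (sumR_term (fun j => Rabs (pic F a t0 h (S (p + m)) t j - pic F a t0 h (p + m) t j))); auto.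
      intros; apply Rabs_pos. }
    eapply Rle_trans. 
    replace (pic F a t0 h (S (p + m)) t j - pic F a t0 h m t j) with
      ((pic F a t0 h (S (p + m)) t j - pic F a t0 h (p + m) t j) + (pic F a t0 h (p + m) t j - pic F a t0 h m t j)) by ring.
    apply Rabs_triang.
    rewrite pow_add in H1. pose proof (pow2_pos p). pose proof (pow2_pos m).
    assert (E : INR N * r / (2 ^ p * 2 ^ m) = 2 * (INR N * r / 2 ^ m) * (/ 2 ^ p - / (2 * 2 ^ p))) by (field; lra).
    rewrite E in H1. 
    replace (2 * (INR N * r / 2 ^ m) * (1 - / (2 * 2 ^ p))) with
      (2 * (INR N * r / 2 ^ m) * (/ 2 ^ p - / (2 * 2 ^ p)) + 2 * (INR N * r / 2 ^ m) * (1 - / 2 ^ p)) by ring.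
    lra.
Qed.

Lemma pic_cauchy' N a r M L F t0 h :
  0 < r -> 0 <= h -> 0 <= M -> 0 <= L -> M * h <= r -> INR N * L * h <= / 2 ->
  Fbnd N a r M F -> Flip N a r L F ->
  forall m p t j, (j < N)%nat ->
  Rabs (pic F a t0 h (p + m) t j - pic F a t0 h m t j) <= (2 * (INR N * r)) / 2 ^ m.
Proof.
  intros Hr Hh HM HL HMh HNL Hb Hl m p t j Hj. eapply Rle_trans. apply (pic_cauchy N a r M L F t0 h); auto.
  pose proof (pow2_pos m). pose proof (pow2_pos p). pose proof (pos_INR N).
  assert (0 <= INR N * r / 2 ^ m) by (apply Rdiv_le_0_compat; nra).
  assert (0 < / 2 ^ p) by (apply Rinv_0_lt_compat; lra).
  assert (E : 2 * (INR N * r) / 2 ^ m = 2 * (INR N * r / 2 ^ m)) by (unfold Rdiv; ring).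
  rewrite E. set (Z := INR N * r / 2 ^ m) in *. nra.
Qed.

Definition plim F (a : nat -> R) t0 h (t : R) (j : nat) : R :=
  real (Lim_seq (fun m => pic F a t0 h m t j)).

Lemma plim_close N a r M L F t0 h :
  0 < r -> 0 <= h -> 0 <= M -> 0 <= L -> M * h <= r -> INR N * L * h <= / 2 ->
  Fbnd N a r M F -> Flip N a r L F ->
  forall m t j, (j < N)%nat ->
  Rabs (plim F a t0 h t j - pic F a t0 h m t j) <= (2 * (INR N * r)) / 2 ^ m.
Proof.
  intros Hr Hh HM HL HMh HNL Hb Hl m t j Hj.
  set (u := fun m => pic F a t0 h m t j).
  assert (Hc : ex_finite_lim_seq u).
  { apply ex_lim_seq_cauchy_corr. intros eps.
    destruct (small_exists (2 * (2 * (INR N * r))) eps (cond_pos eps)) as [m0 Hm0].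
    exists m0. intros n1 n2 H1 H2.
    pose proof (pic_cauchy' N a r M L F t0 h Hr Hh HM HL HMh HNL Hb Hl m0 (n1 - m0) t j Hj) as E1.
    pose proof (pic_cauchy' N a r M L F t0 h Hr Hh HM HL HMh HNL Hb Hl m0 (n2 - m0) t j Hj) as E2.
    replace (n1 - m0 + m0)%nat with n1 in E1 by lia. replace (n2 - m0 + m0)%nat with n2 in E2 by lia.
    unfold u. replace (pic F a t0 h n1 t j - pic F a t0 h n2 t j) with
      ((pic F a t0 h n1 t j - pic F a t0 h m0 t j) - (pic F a t0 h n2 t j - pic F a t0 h m0 t j)) by ring.
    eapply Rle_lt_trans. apply Rabs_triang. rewrite Rabs_Ropp.
    unfold Rdiv in *. lra. }
  destruct Hc as [l Hl'].
  unfold plim. fold u. rewrite (is_lim_seq_unique u l Hl'). simpl.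
  apply (lim_close u l m). auto. intros p. apply (pic_cauchy' N a r M L F t0 h); auto.
Qed.

Lemma picard N a r M L F t0 h :
  0 < r -> 0 < h -> 0 <= M -> 0 <= L -> M * h <= r -> INR N * L * h <= / 2 ->
  Fbnd N a r M F -> Flip N a r L F ->
  exists X : R -> nat -> R,
    (forall j, (j < N)%nat -> X t0 j = a j) /\ Good N a r M X /\
    (forall t j, (j < N)%nat -> X t j = a j + RInt (fun s => F (X s) j) t0 (clampf t0 h t)) /\
    (forall t, Rabs (t - t0) < h -> forall j, (j < N)%nat -> is_derive (fun s => X s j) t (F (X t) j)).
Proof.
  intros Hr Hh HM HL HMh HNL Hb Hl.
  assert (Hh' : 0 <= h) by lra.
  pose proof (plim_close N a r M L F t0 h Hr Hh' HM HL HMh HNL Hb Hl) as Cl.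
  set (C := 2 * (INR N * r)).
  set (X := plim F a t0 h).
  assert (Hpm : forall m, Good N a r M (pic F a t0 h m)) by (intros; apply (good_pic N a r M L F t0 h); auto).
  assert (GX : Good N a r M X).
  { split.
    - intros t j Hj. apply (small_le' _ _ C). intros m.
      destruct (Hpm m) as [Hg _]. specialize (Hg t j Hj). specialize (Cl m t j Hj).
      eapply Rle_trans. replace (X t j - a j) with ((X t j - pic F a t0 h m t j) + (pic F a t0 h m t j - a j)) by ring.
      apply Rabs_triang. fold C in Cl. unfold X. lra.
    - intros t s j Hj. apply (small_le' _ _ (2 * C)). intros m.
      destruct (Hpm m) as [_ Hg]. specialize (Hg t s j Hj).
      pose proof (Cl m t j Hj) as C1. pose proof (Cl m s j Hj) as C2. fold C in C1, C2.
      replace (X t j - X s j) with ((X t j - pic F a t0 h m t j) + (pic F a t0 h m t j - pic F a t0 h m s j)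
        - (X s j - pic F a t0 h m s j)) by ring.
      eapply Rle_trans. apply Rabs_triang. rewrite Rabs_Ropp.
      eapply Rle_trans. apply Rplus_le_compat_r. apply Rabs_triang. unfold X in *. unfold Rdiv in *. lra. }
  assert (HI : forall t j, (j < N)%nat -> X t j = a j + RInt (fun s => F (X s) j) t0 (clampf t0 h t)).
  { intros t j Hj.
    assert (X t j - a j - RInt (fun s => F (X s) j) t0 (clampf t0 h t) = 0); [|lra].
    apply (small_eq _ (2 * C)). intros m.
    pose proof (Cl (S m) t j Hj) as C1. fold C in C1. change (2 ^ S m) with (2 * 2 ^ m) in C1.
    change (pic F a t0 h (S m) t j) with (a j + RInt (fun s => F (pic F a t0 h m s) j) t0 (clampf t0 h t)) in C1.
    replace (X t j - a j - RInt (fun s : R => F (X s) j) t0 (clampf t0 h t)) with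
      ((X t j - (a j + RInt (fun s : R => F (pic F a t0 h m s) j) t0 (clampf t0 h t))) +
       (RInt (fun s : R => F (pic F a t0 h m s) j) t0 (clampf t0 h t) - RInt (fun s : R => F (X s) j) t0 (clampf t0 h t))) by ring.
    eapply Rle_trans. apply Rabs_triang.
    rewrite RInt_minusR by (apply (Fint N a r M L F); auto).
    assert (H2 : Rabs (RInt (fun s => F (pic F a t0 h m s) j - F (X s) j) t0 (clampf t0 h t)) <=
       (L * (INR N * (C / 2 ^ m))) * h).
    { eapply Rle_trans. apply RInt_bound with (K := L * (INR N * (C / 2 ^ m))).
      apply (@ex_RInt_minus R_CompleteNormedModule); apply (Fint N a r M L F); auto.
      intros x _. eapply Rle_trans. apply Hl. apply Hpm. apply GX. auto.
      apply Rmult_le_compat_l; auto. rewrite <- sumR_const. apply sumR_le. intros l Hl'.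
      rewrite Rabs_minus_sym. apply Cl; auto.
      apply Rmult_le_compat_l. apply Rmult_le_pos; auto. apply Rmult_le_pos. apply pos_INR.
      apply Rdiv_le_0_compat. unfold C. pose proof (pos_INR N). nra. apply pow2_pos.
      apply clamp_in; auto. }
    pose proof (pow2_pos m). unfold X in *.
    assert (E : L * (INR N * (C / 2 ^ m)) * h = (INR N * L * h) * (C / 2 ^ m)) by ring.
    assert (0 <= C / 2 ^ m) by (apply Rdiv_le_0_compat; [unfold C; pose proof (pos_INR N); nra| lra]).
    assert ((INR N * L * h) * (C / 2 ^ m) <= /2 * (C / 2 ^ m)) by (apply Rmult_le_compat_r; auto).
    assert (C / (2 * 2 ^ m) = / 2 * (C / 2 ^ m)) by (field; lra).
    assert (2 * C / 2 ^ m = 2 * (C / 2 ^ m)) by (field; lra).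
    lra. }
  exists X. split; [|split; [exact GX| split; [exact HI|]]].
  - intros j Hj. assert (X t0 j - a j = 0); [|lra]. apply (small_eq _ C). intros m.
    assert (E : pic F a t0 h m t0 j = a j).
    { destruct m. reflexivity. simpl. rewrite clamp_id by (rewrite Rminus_diag, Rabs_R0; lra).
      rewrite (RInt_point (V:=R_CompleteNormedModule)). unfold zero; simpl. ring. }
    rewrite <- E. apply Cl; auto.
  - intros t Ht j Hj.
    set (g := fun s => F (X s) j).
    assert (Hgc : forall x, continuous g x) by (intros; apply (Fcont N a r M L F); auto).
    apply (is_derive_ext_loc (fun s => a j + RInt g t0 s)).
    + assert (Hd : 0 < h - Rabs (t - t0)) by lra.
      exists (mkposreal _ Hd). intros s Hs. pose proof (proj1 (ballR _ _ _) Hs) as Hs1. simpl in Hs1.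
      rewrite (HI s j Hj). fold g. rewrite clamp_id; auto.
      replace (s - t0) with ((s - t) + (t - t0)) by ring.
      eapply Rle_trans. apply Rabs_triang. lra.
    + replace (F (X t) j) with (plus zero (g t)) by (unfold g, plus, zero; simpl; ring).
      apply (is_derive_plus (fun _ => a j) (fun s => RInt g t0 s)).
      apply (@is_derive_const R_AbsRing R_NormedModule).
      apply (D_RInt g (Rmin t t0 - 1) (Rmax t t0 + 1)).
      intros; apply Hgc.
      split; [pose proof (Rmin_r t t0)| pose proof (Rmax_r t t0)]; lra.
      split; [pose proof (Rmin_l t t0)| pose proof (Rmax_l t t0)]; lra.
Qed.

Lemma uniq N (F : (nat -> R) -> nat -> R) (O X : R -> nat -> R) (a : nat -> R) t1 t1e L K :
  0 <= L -> 0 <= K -> t1 <= t1e -> INR N * L * (t1e - t1) <= / 2 ->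
  (forall s j, t1 <= s <= t1e -> (j < N)%nat -> O s j = a j + RInt (fun u => F (O u) j) t1 s) ->
  (forall s j, t1 <= s <= t1e -> (j < N)%nat -> X s j = a j + RInt (fun u => F (X u) j) t1 s) ->
  (forall s j, t1 <= s <= t1e -> (j < N)%nat ->
     Rabs (F (O s) j - F (X s) j) <= L * sumR (fun l => Rabs (O s l - X s l)) N) ->
  (forall s, t1 <= s <= t1e -> sumR (fun l => Rabs (O s l - X s l)) N <= K) ->
  (forall s j, t1 <= s <= t1e -> (j < N)%nat -> continuous (fun u => F (O u) j) s) ->
  (forall s j, t1 <= s <= t1e -> (j < N)%nat -> continuous (fun u => F (X u) j) s) ->
  forall s j, t1 <= s <= t1e -> (j < N)%nat -> O s j = X s j.
Proof.
  intros HL HK Ht HNL HO HX Hlip HB HcO HcX.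
  assert (Hint : forall s j, t1 <= s <= t1e -> (j < N)%nat ->
     ex_RInt (fun u => F (O u) j) t1 s /\ ex_RInt (fun u => F (X u) j) t1 s).
  { intros s j Hs Hj. split;
    apply (@ex_RInt_continuous R_CompleteNormedModule); intros z Hz;
    rewrite Rmin_left, Rmax_right in Hz by lra; [apply HcO| apply HcX]; auto; lra. }
  assert (Hm : forall m s, t1 <= s <= t1e -> sumR (fun l => Rabs (O s l - X s l)) N <= K / 2 ^ m).
  { induction m; intros s Hs.
    - simpl. unfold Rdiv. rewrite Rinv_1, Rmult_1_r. auto.
    - apply Rle_trans with (sumR (fun _ => L * (K / 2 ^ m) * (t1e - t1)) N).
      + apply sumR_le. intros j Hj. rewrite (HO s j Hs Hj), (HX s j Hs Hj).
        destruct (Hint s j Hs Hj) as [I1 I2].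
        assert (Q : forall x y z : R, x + y - (x + z) = y - z) by (intros; ring). rewrite Q.
        rewrite RInt_minusR by auto.
        eapply Rle_trans. apply RInt_bound with (K := L * (K / 2 ^ m)).
        apply (@ex_RInt_minus R_CompleteNormedModule); auto.
        intros x Hx. rewrite Rmin_left, Rmax_right in Hx by lra.
        eapply Rle_trans. apply Hlip; auto; lra. apply Rmult_le_compat_l; auto. apply IHm. lra.
        apply Rmult_le_compat_l. apply Rmult_le_pos; auto. apply Rdiv_le_0_compat; auto. apply pow2_pos.
        rewrite Rabs_right by lra. lra.
      + rewrite sumR_const. change (2 ^ S m) with (2 * 2 ^ m). pose proof (pow2_pos m).
        assert (0 <= K / 2 ^ m) by (apply Rdiv_le_0_compat; lra).
        replace (INR N * (L * (K / 2 ^ m) * (t1e - t1))) with ((INR N * L * (t1e - t1)) * (K / 2 ^ m)) by ring.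
        replace (K / (2 * 2 ^ m)) with (/2 * (K / 2 ^ m)) by (field; lra).
        apply Rmult_le_compat_r; auto. }
  intros s j Hs Hj. assert (O s j - X s j = 0); [|lra].
  apply (small_eq _ K). intros m. eapply Rle_trans; [|apply (Hm m s Hs)].
  apply (sumR_term (fun l => Rabs (O s l - X s l))); auto. intros; apply Rabs_pos.
Qed.

Definition Fsys (n : nat) (k cb : R) (x : nat -> R) (j : nat) : R :=
  if (j <? n)%nat then - (x j) ^ 2 + k / INR n * (x n - cb)
  else - x n * sumR (fun i => x i) n.

Lemma cR_plus (f g : R -> R) x : continuous f x -> continuous g x -> continuous (fun u => f u + g u) x.
Proof. intros. apply (continuous_plus (K:=R_AbsRing) (V:=R_NormedModule) f g x); auto. Qed.
Lemma cR_mult (f g : R -> R) x : continuous f x -> continuous g x -> continuous (fun u => f u * g u) x.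
Proof. intros. apply (continuous_mult (K:=R_AbsRing) f g x); auto. Qed.
Lemma cR_opp (f : R -> R) x : continuous f x -> continuous (fun u => - f u) x.
Proof. intros. apply (continuous_opp (K:=R_AbsRing) (V:=R_NormedModule) f x); auto. Qed.
Lemma cR_const (c : R) x : continuous (fun _ : R => c) x.
Proof. apply continuous_const. Qed.

Lemma cR_sumR (Y : R -> nat -> R) n x : (forall i, (i < n)%nat -> continuous (fun u => Y u i) x) ->
  continuous (fun u => sumR (fun i => Y u i) n) x.
Proof. induction n; intros H; simpl. apply cR_const.
  apply (cR_plus (fun u => sumR (fun i => Y u i) n) (fun u => Y u n)). apply IHn; intros; apply H; lia. apply H; lia. Qed.

Lemma Fsys_cont n k cb (Y : R -> nat -> R) x j :
  (forall l, (l < S n)%nat -> continuous (fun u => Y u l) x) ->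
  continuous (fun u => Fsys n k cb (Y u) j) x.
Proof.
  intros H. unfold Fsys. destruct (j <? n)%nat eqn:E.
  - apply Nat.ltb_lt in E.
    apply (cR_plus (fun u => - Y u j ^ 2) (fun u => k / INR n * (Y u n - cb))).
    + apply (cR_opp (fun u => Y u j ^ 2)). apply (continuous_ext (fun u => Y u j * (Y u j * 1))).
      intros; reflexivity. apply (cR_mult (fun u => Y u j)). apply H; lia.
      apply (cR_mult (fun u => Y u j)). apply H; lia. apply cR_const.
    + apply (cR_mult (fun _ => k / INR n)). apply cR_const.
      apply (continuous_ext (fun u => Y u n + - cb)). intros; reflexivity.
      apply (cR_plus (fun u => Y u n)). apply H; lia. apply cR_const.
  - apply (cR_mult (fun u => - Y u n)). apply (cR_opp (fun u => Y u n)). apply H; lia.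
    apply cR_sumR. intros; apply H; lia.
Qed.

Definition regd N B (x : nat -> R) := forall j, (j < N)%nat -> Rabs (x j) <= B.

Lemma sumR_absle f n B : (forall i, (i < n)%nat -> Rabs (f i) <= B) -> Rabs (sumR f n) <= INR n * B.
Proof. intros H. eapply Rle_trans. apply sumR_abs. rewrite <- sumR_const. apply sumR_le. auto. Qed.

Lemma Fsys_bnd n k cb B x j : (1 <= n)%nat -> 0 < k -> 0 < cb -> 0 <= B -> regd (S n) B x -> (j < S n)%nat ->
  Rabs (Fsys n k cb x j) <= B * B + k * (B + cb) + INR n * B * B.
Proof.
  intros Hn Hk Hcb HB Hr Hj. assert (HnR : 1 <= INR n) by (apply (le_INR 1); lia).
  assert (Hkn : 0 <= k / INR n <= k).
  { split. apply Rdiv_le_0_compat; lra. unfold Rdiv. rewrite <- (Rmult_1_r k) at 2.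
    apply Rmult_le_compat_l. lra. rewrite <- Rinv_1. apply Rinv_le_contravar; lra. }
  assert (0 <= INR n * B * B) by (apply Rmult_le_pos; [apply Rmult_le_pos|]; lra).
  unfold Fsys. destruct (j <? n)%nat eqn:E.
  - apply Nat.ltb_lt in E. pose proof (Hr j Hj) as H1. pose proof (Hr n (Nat.lt_succ_diag_r n)) as H2.
    eapply Rle_trans. apply Rabs_triang. rewrite Rabs_Ropp, Rabs_mult, (Rabs_right (k / INR n)) by lra.
    assert (Rabs (x j ^ 2) <= B * B) by (rewrite <- RPow_abs; simpl; rewrite Rmult_1_r; apply Rmult_le_compat; try apply Rabs_pos; auto).
    assert (Rabs (x n - cb) <= B + cb) by (eapply Rle_trans; [apply Rabs_triang| rewrite Rabs_Ropp, (Rabs_right cb) by lra; lra]).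
    assert (k / INR n * Rabs (x n - cb) <= k * (B + cb)) by (apply Rmult_le_compat; try lra; apply Rabs_pos).
    lra.
  - pose proof (Hr n (Nat.lt_succ_diag_r n)) as H2.
    rewrite Rabs_mult, Rabs_Ropp.
    assert (Rabs (sumR (fun i => x i) n) <= INR n * B) by (apply sumR_absle; intros; apply Hr; lia).
    assert (Rabs (x n) * Rabs (sumR (fun i => x i) n) <= B * (INR n * B)) by (apply Rmult_le_compat; try apply Rabs_pos; auto).
    assert (0 <= B * B) by nra. assert (0 <= k * (B + cb)) by nra. nra.
Qed.

Lemma Fsys_lip n k cb B x y j : (1 <= n)%nat -> 0 < k -> 0 < cb -> 0 <= B -> regd (S n) B x -> regd (S n) B y ->
  (j < S n)%nat ->
  Rabs (Fsys n k cb x j - Fsys n k cb y j) <= (2 * B + k + (INR n + 1) * B) * sumR (fun l => Rabs (x l - y l)) (S n).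
Proof.
  intros Hn Hk Hcb HB Hx Hy Hj. assert (HnR : 1 <= INR n) by (apply (le_INR 1); lia).
  assert (Hkn : 0 <= k / INR n <= k).
  { split. apply Rdiv_le_0_compat; lra. unfold Rdiv. rewrite <- (Rmult_1_r k) at 2.
    apply Rmult_le_compat_l. lra. rewrite <- Rinv_1. apply Rinv_le_contravar; lra. }
  set (S0 := sumR (fun l => Rabs (x l - y l)) n).
  assert (HS : sumR (fun l => Rabs (x l - y l)) (S n) = S0 + Rabs (x n - y n)) by reflexivity.
  rewrite HS. assert (0 <= S0) by (apply sumR_nonneg; intros; apply Rabs_pos).
  pose proof (Rabs_pos (x n - y n)).
  pose proof (Hx n (Nat.lt_succ_diag_r n)) as Xn. pose proof (Hy n (Nat.lt_succ_diag_r n)) as Yn.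
  assert (0 <= (INR n + 1) * B) by nra.
  unfold Fsys. destruct (j <? n)%nat eqn:E.
  - apply Nat.ltb_lt in E.
    assert (Hdj : Rabs (x j - y j) <= S0) by (apply (sumR_term (fun l => Rabs (x l - y l))); auto; intros; apply Rabs_pos).
    replace (- x j ^ 2 + k / INR n * (x n - cb) - (- y j ^ 2 + k / INR n * (y n - cb))) with
      (- ((x j + y j) * (x j - y j)) + k / INR n * (x n - y n)) by ring.
    eapply Rle_trans. apply Rabs_triang. rewrite Rabs_Ropp, !Rabs_mult, (Rabs_right (k / INR n)) by lra.
    assert (Rabs (x j + y j) <= 2 * B) by (eapply Rle_trans; [apply Rabs_triang|]; pose proof (Hx j Hj); pose proof (Hy j Hj); lra).
    assert (Rabs (x j + y j) * Rabs (x j - y j) <= 2 * B * S0) by (apply Rmult_le_compat; try apply Rabs_pos; auto).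
    assert (k / INR n * Rabs (x n - y n) <= k * Rabs (x n - y n)) by (apply Rmult_le_compat_r; try apply Rabs_pos; lra).
    nra.
  - replace (- x n * sumR (fun i => x i) n - - y n * sumR (fun i => y i) n) with
      (- (x n * (sumR (fun i => x i) n - sumR (fun i => y i) n) + (x n - y n) * sumR (fun i => y i) n)) by ring.
    rewrite Rabs_Ropp. eapply Rle_trans. apply Rabs_triang. rewrite !Rabs_mult.
    rewrite <- sumR_minus.
    assert (Rabs (sumR (fun i => x i - y i) n) <= S0) by apply sumR_abs.
    assert (Rabs (sumR (fun i => y i) n) <= INR n * B) by (apply sumR_absle; intros; apply Hy; lia).
    assert (Rabs (x n) * Rabs (sumR (fun i => x i - y i) n) <= B * S0) by (apply Rmult_le_compat; try apply Rabs_pos; auto).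
    assert (Rabs (x n - y n) * Rabs (sumR (fun i => y i) n) <= Rabs (x n - y n) * (INR n * B)) by (apply Rmult_le_compat_l; auto).
    nra.
Qed.

Definition Ost (n : nat) (lam : nat -> R -> R) (rho : R -> R) (t : R) (j : nat) : R :=
  if (j <? n)%nat then lam j t else rho t.

Lemma Ost_lam n lam rho t i : (i < n)%nat -> Ost n lam rho t i = lam i t.
Proof. intros H. unfold Ost. apply Nat.ltb_lt in H. rewrite H. auto. Qed.
Lemma Ost_rho n lam rho t : Ost n lam rho t n = rho t.
Proof. unfold Ost. rewrite Nat.ltb_irrefl. auto. Qed.

Lemma Fsys_ext n k cb x y j : (forall l, (l < S n)%nat -> x l = y l) -> (j < S n)%nat ->
  Fsys n k cb x j = Fsys n k cb y j.
Proof. intros H Hj. unfold Fsys. destruct (j <? n)%nat eqn:E.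
  - rewrite (H j), (H n) by lia. auto.
  - rewrite (H n) by lia. rewrite (sumR_ext (fun i => x i) (fun i => y i)) by (intros; apply H; lia). auto. Qed.

Lemma Ost_deriv n k cb rho0 lam0 T lam rho t j :
  is_sol n k cb rho0 lam0 T lam rho -> 0 < t < T -> (j < S n)%nat ->
  is_derive (fun s => Ost n lam rho s j) t (Fsys n k cb (Ost n lam rho t) j).
Proof.
  intros [_ [_ [_ [_ Hd]]]] Ht Hj. destruct (Hd t Ht) as [Hl Hr].
  unfold Fsys. destruct (j <? n)%nat eqn:E.
  - apply Nat.ltb_lt in E. rewrite Ost_rho, Ost_lam by auto.
    apply (is_derive_ext (lam j)). intros; rewrite Ost_lam; auto. apply Hl; auto.
  - apply Nat.ltb_ge in E. assert (j = n) by lia. subst j. rewrite Ost_rho.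
    rewrite (sumR_ext (fun i => Ost n lam rho t i) (fun i => lam i t)) by (intros; apply Ost_lam; auto).
    apply (is_derive_ext rho). intros; rewrite Ost_rho; auto. auto.
Qed.

Lemma ext_contra n k cb rho0 lam0 tB lam rho s0 B0 :
  (2 <= n)%nat -> 0 < k -> 0 < cb -> 0 < tB -> maximal_sol n k cb rho0 lam0 tB lam rho ->
  0 < s0 < tB -> 0 <= B0 ->
  (forall t, s0 <= t < tB -> (forall i, (i < n)%nat -> Rabs (lam i t) <= B0) /\ Rabs (rho t) <= B0) -> False.
Proof.
  intros Hn Hk Hcb HtB [Hsol Hmax] Hs0 HB0 Hbd.
  set (O := Ost n lam rho).
  assert (HOd : forall t, 0 < t < tB -> forall j, (j < S n)%nat -> is_derive (fun s => O s j) t (Fsys n k cb (O t) j))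
    by (intros; apply (Ost_deriv n k cb rho0 lam0 tB); auto).
  assert (HOc : forall t, 0 < t < tB -> forall j, (j < S n)%nat -> continuous (fun s => O s j) t)
    by (intros; eapply deriv_cont; apply HOd; auto).
  assert (HOreg : forall t, s0 <= t < tB -> regd (S n) B0 (O t)).
  { intros t Ht j Hj. destruct (Hbd t Ht) as [H1 H2]. unfold O.
    destruct (Nat.eq_dec j n) as [->|Hne]. rewrite Ost_rho; auto. rewrite Ost_lam by lia. apply H1; lia. }
  set (B := B0 + 1). set (N := S n).
  set (Mb := B * B + k * (B + cb) + INR n * B * B).
  set (Lb := 2 * B + k + (INR n + 1) * B).
  assert (Hn1 : (1 <= n)%nat) by lia.
  assert (HnR : 0 <= INR n) by apply pos_INR.
  assert (HB : 0 < B) by (unfold B; lra).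
  assert (HMb : 0 <= Mb) by (unfold Mb; assert (0 <= INR n * B * B) by (apply Rmult_le_pos; nra); nra).
  assert (HLb : 0 <= Lb) by (unfold Lb; nra).
  assert (HNR : 0 <= INR N) by apply pos_INR.
  set (D := 2 * (INR N * Lb + 1)).
  assert (HD : 1 <= D) by (unfold D; assert (0 <= INR N * Lb) by nra; lra).
  set (h := / ((Mb + 1) * D)).
  assert (Hh : 0 < h) by (unfold h; apply Rinv_0_lt_compat; nra).
  assert (HMh : Mb * h <= 1).
  { unfold h. apply (Rmult_le_reg_r ((Mb + 1) * D)). nra.
    rewrite Rmult_assoc, Rinv_l by nra. nra. }
  assert (HNL : INR N * Lb * h <= / 2).
  { unfold h. apply (Rmult_le_reg_r (2 * ((Mb + 1) * D))). nra.
    replace (INR N * Lb * / ((Mb + 1) * D) * (2 * ((Mb + 1) * D))) with (2 * (INR N * Lb)) by (field; nra).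
    replace (/ 2 * (2 * ((Mb + 1) * D))) with ((Mb + 1) * D) by field.
    unfold D. assert (0 <= INR N * Lb) by nra. nra. }
  set (t1 := Rmax s0 (tB - h / 2)).
  assert (Ht1 : s0 <= t1 < tB /\ tB - h / 2 <= t1).
  { unfold t1. split; [split|]. apply Rmax_l. apply Rmax_lub_lt; lra. apply Rmax_r. }
  set (a := O t1).
  assert (Ha : regd (S n) B0 a) by (apply HOreg; lra).
  assert (Hbox : forall x, boxd N a 1 x -> regd (S n) B x).
  { intros x Hx j Hj. specialize (Hx j Hj). specialize (Ha j Hj).
    replace (x j) with ((x j - a j) + a j) by ring. eapply Rle_trans. apply Rabs_triang. unfold B; lra. }
  assert (HFb : Fbnd N a 1 Mb (Fsys n k cb)).
  { intros x Hx j Hj. apply Fsys_bnd; auto; lra. }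
  assert (HFl : Flip N a 1 Lb (Fsys n k cb)).
  { intros x y Hx Hy j Hj. apply Fsys_lip; auto; lra. }
  destruct (picard N a 1 Mb Lb (Fsys n k cb) t1 h) as [X [HX0 [GX [HXI HXd]]]]; auto; try lra.
  assert (HXreg : forall t, regd (S n) B (X t)) by (intros; apply Hbox; apply GX).
  assert (HXc : forall t j, (j < N)%nat -> continuous (fun s => X s j) t).
  { intros t j Hj. apply (cont_lip _ _ Mb). intros y. apply GX; auto. }
  assert (HU : forall s, t1 <= s < tB -> forall j, (j < N)%nat -> O s j = X s j).
  { intros s Hs j Hj.
    apply (uniq N (Fsys n k cb) O X a t1 s Lb (INR N * (2 * B))); auto; try lra.
    - nra.
    - assert (s - t1 <= h) by lra. apply Rle_trans with (INR N * Lb * h); auto.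
      apply Rmult_le_compat_l; nra.
    - intros u l Hu Hl. 
      pose proof (is_RInt_derive (V:=R_CompleteNormedModule) (fun v => O v l) (fun v => Fsys n k cb (O v) l) t1 u) as HR.
      rewrite Rmin_left, Rmax_right in HR by lra.
      assert (E : RInt (fun v => Fsys n k cb (O v) l) t1 u = O u l - O t1 l).
      { apply is_RInt_unique. apply HR.
        intros x Hx. apply HOd; auto; lra.
        intros x Hx. apply Fsys_cont. intros; apply HOc; auto; lra. }
      rewrite E. unfold a. ring.
    - intros u l Hu Hl. rewrite (HXI u l Hl). rewrite clamp_id; auto.
      rewrite Rabs_right by lra. lra.
    - intros u l Hu Hl. apply Fsys_lip; auto; try lra.
      intros m Hm. eapply Rle_trans. apply (HOreg u); auto; lra. unfold B; lra.
    - intros u Hu. unfold N. rewrite <- sumR_const. apply sumR_le. intros l Hl.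
      replace (O u l - X u l) with (O u l + - X u l) by ring. eapply Rle_trans. apply Rabs_triang.
      rewrite Rabs_Ropp. assert (Rabs (O u l) <= B0) by (apply HOreg; auto; lra).
      assert (Rabs (X u l) <= B) by (apply HXreg; auto). unfold B in *; lra.
    - intros u l Hu Hl. apply Fsys_cont. intros; apply HOc; auto; lra.
    - intros u l Hu Hl. apply Fsys_cont. intros; apply HXc; auto. }
  set (t2 := (t1 + tB) / 2).
  set (G := fun t => if Rlt_dec t t2 then O t else X t).
  assert (HGO : forall t, 0 <= t < tB -> forall j, (j < N)%nat -> G t j = O t j).
  { intros t Ht j Hj. unfold G. destruct Rlt_dec; auto. symmetry. apply HU; auto. unfold t2 in *. lra. }
  set (T := t1 + h).
  assert (HT : tB < T) by (unfold T; lra).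
  assert (HGd : forall t, 0 < t < T -> forall j, (j < N)%nat -> is_derive (fun s => G s j) t (Fsys n k cb (G t) j)).
  { intros t Ht j Hj.
    destruct (Rlt_dec t t2) as [Hlt|Hge].
    - assert (E : G t = O t) by (unfold G; destruct Rlt_dec; [auto|lra]). rewrite E.
      apply (is_derive_ext_loc (fun s => O s j)).
      + assert (Hd : 0 < t2 - t) by lra. exists (mkposreal _ Hd). intros s Hs.
        pose proof (proj1 (ballR _ _ _) Hs) as Hs1. simpl in Hs1. apply Rabs_lt_between in Hs1.
        unfold G. destruct Rlt_dec; auto. lra.
      + apply HOd; auto. unfold t2 in *; lra.
    - destruct (Rlt_dec t tB) as [HtB'|HtB'].
      + rewrite (Fsys_ext n k cb (G t) (O t)) by (auto; intros; apply HGO; auto; lra).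
        apply (is_derive_ext_loc (fun s => O s j)).
        * assert (Hd : 0 < Rmin (t - t1) (tB - t)) by (apply Rmin_glb_lt; unfold t2 in *; lra).
          exists (mkposreal _ Hd). intros s Hs.
          pose proof (proj1 (ballR _ _ _) Hs) as Hs1. simpl in Hs1.
          pose proof (Rmin_l (t - t1) (tB - t)). pose proof (Rmin_r (t - t1) (tB - t)).
          apply Rabs_lt_between in Hs1.
          symmetry. apply HGO; auto. lra.
        * apply HOd; auto. lra.
      + assert (E : G t = X t) by (unfold G; destruct Rlt_dec; [lra|auto]). rewrite E.
        apply (is_derive_ext_loc (fun s => X s j)).
        * assert (Hd : 0 < t - t2) by (unfold t2 in *; lra). exists (mkposreal _ Hd). intros s Hs.
          pose proof (proj1 (ballR _ _ _) Hs) as Hs1. simpl in Hs1. apply Rabs_lt_between in Hs1.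
          unfold G. destruct Rlt_dec; auto. lra.
        * apply HXd; auto. apply Rabs_lt_between. unfold T in Ht. lra. }
  apply (Hmax T (fun i t => G t i) (fun t => G t n) HT).
  - assert (Ht2 : 0 < t2) by (unfold t2; lra).
    destruct Hsol as [Hr0 [Hl0 [Hrc [Hlc _]]]].
    assert (HG0 : G 0 = O 0) by (unfold G; destruct Rlt_dec; [auto|lra]).
    assert (Hloc : at_right 0 (fun x => G x = O x)).
    { exists (mkposreal _ Ht2). intros y Hy Hy0. pose proof (proj1 (ballR _ _ _) Hy) as Hs1. simpl in Hs1.
      apply Rabs_lt_between in Hs1. unfold G. destruct Rlt_dec; auto. lra. }
    split; [|split; [|split; [|split]]].
    + rewrite HG0. unfold O. rewrite Ost_rho. auto.
    + intros i Hi. rewrite HG0. unfold O. rewrite Ost_lam; auto.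
    + rewrite HG0. unfold O at 1. rewrite Ost_rho.
      apply (filterlim_ext_loc rho). 
      eapply filter_imp; [|exact Hloc]. intros x Hx. rewrite Hx. unfold O. rewrite Ost_rho. auto. auto.
    + intros i Hi. rewrite HG0. unfold O at 1. rewrite Ost_lam by auto.
      apply (filterlim_ext_loc (lam i)).
      eapply filter_imp; [|exact Hloc]. intros x Hx. rewrite Hx. unfold O. rewrite Ost_lam; auto. auto.
    + intros t Ht. split.
      * intros i Hi. pose proof (HGd t Ht i ltac:(unfold N; lia)) as H. unfold Fsys in H.
        apply Nat.ltb_lt in Hi. rewrite Hi in H. exact H.
      * pose proof (HGd t Ht n ltac:(unfold N; lia)) as H. unfold Fsys in H.
        rewrite Nat.ltb_irrefl in H. exact H.
  - intros t Ht. split.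
    + rewrite HGO by (auto; unfold N; lia). unfold O. apply Ost_rho.
    + intros i Hi. rewrite HGO by (auto; unfold N; lia). unfold O. apply Ost_lam; auto.
Qed.

Lemma sol_lam_cont n k cb rho0 lam0 T lam rho t i :
  is_sol n k cb rho0 lam0 T lam rho -> 0 < t < T -> (i < n)%nat -> continuous (lam i) t.
Proof. intros [_ [_ [_ [_ Hd]]]] Ht Hi. eapply deriv_cont. apply (proj1 (Hd t Ht) i Hi). Qed.

Lemma sol_rho_cont n k cb rho0 lam0 T lam rho t :
  is_sol n k cb rho0 lam0 T lam rho -> 0 < t < T -> continuous rho t.
Proof. intros [_ [_ [_ [_ Hd]]]] Ht. eapply deriv_cont. apply (proj2 (Hd t Ht)). Qed.

Lemma rho_pos n k cb rho0 lam0 T lam rho :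
  0 < rho0 -> 0 < T -> is_sol n k cb rho0 lam0 T lam rho -> forall t, 0 < t < T -> 0 < rho t.
Proof.
  intros Hr0 HT Hsol. pose proof Hsol as [H0 [_ [Hrc [_ Hd]]]].
  assert (Hd0 : exists d, 0 < d < T /\ 0 < rho d).
  { assert (He : 0 < rho0 / 2) by lra.
    destruct (proj1 (filterlim_locally rho (rho 0)) Hrc (mkposreal _ He)) as [e He'].
    exists (Rmin e T / 2). assert (0 < Rmin e T) by (apply Rmin_glb_lt; [apply cond_pos|lra]).
    split. split. lra. pose proof (Rmin_r e T). lra.
    assert (Hb : ball 0 e (Rmin e T / 2)).
    { apply ballR. rewrite Rminus_0_r, Rabs_right by lra. pose proof (Rmin_l e T). pose proof (cond_pos e). lra. }
    specialize (He' _ Hb ltac:(lra)). pose proof (proj1 (ballR _ _ _) He') as He2. simpl in He2. rewrite H0 in He2.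
    apply Rabs_lt_between in He2. lra. }
  destruct Hd0 as [d [Hd1 Hd2]].
  set (ls := fun u => sumR (fun i => lam i u) n).
  assert (Hlc : forall x, 0 < x < T -> continuous ls x).
  { intros x Hx. apply (cR_sumR (fun u i => lam i u)). intros i Hi. eapply sol_lam_cont; eauto. }
  set (Lm := fun x => RInt ls d x).
  assert (HLd : forall x, 0 < x < T -> is_derive Lm x (ls x)) by (intros; apply (D_RInt ls 0 T); auto).
  set (Phi := fun x => rho x * exp (Lm x)).
  assert (HPd : forall x, 0 < x < T -> is_derive Phi x 0).
  { intros x Hx. destruct (Hd x Hx) as [_ Hrx].
    pose proof (Derive.is_derive_mult rho (fun y => exp (Lm y)) x _ _ Hrx
       (is_derive_comp exp Lm x _ _ (is_derive_exp (Lm x)) (HLd x Hx))) as H.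
    unfold Phi. replace 0 with (- rho x * sumR (fun i : nat => lam i x) n * exp (Lm x) +
     rho x * scal (ls x) (exp (Lm x))). exact H.
    unfold scal; simpl; unfold mult; simpl; unfold ls; ring. }
  intros t Ht.
  assert (E : Phi t = Phi d) by (apply (const_d0 Phi 0 T); auto).
  unfold Phi, Lm in E. rewrite (RInt_point (V:=R_CompleteNormedModule)) in E.
  unfold zero in E; simpl in E. rewrite exp_0, Rmult_1_r in E.
  pose proof (exp_pos (RInt ls d t)).
  apply (Rmult_lt_reg_r (exp (RInt ls d t))); auto. rewrite E. lra.
Qed.

Lemma I_deriv n k cb rho0 lam0 T lam rho :
  0 < T -> is_sol n k cb rho0 lam0 T lam rho -> forall t, 0 < t < T ->
  is_derive (fun x => RInt rho 0 x) t (rho t).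
Proof.
  intros HT Hsol t Ht. pose proof Hsol as [_ [_ [Hrc _]]].
  set (rt := fun u => if Rle_dec u 0 then rho 0 else rho u).
  assert (Hc : forall u, -1 < u < T -> continuous rt u).
  { intros u Hu. destruct (Rtotal_order u 0) as [Hlt|[Heq|Hgt]].
    - apply (continuous_ext_loc _ (fun _ => rho 0)).
      + assert (Hd : 0 < - u) by lra. exists (mkposreal _ Hd). intros y Hy.
        pose proof (proj1 (ballR _ _ _) Hy) as Hy1. simpl in Hy1. apply Rabs_lt_between in Hy1.
        unfold rt. destruct Rle_dec; auto. lra.
      + apply cR_const.
    - subst u. apply cont_eps. intros e He.
      destruct (proj1 (filterlim_locally rho (rho 0)) Hrc (mkposreal _ He)) as [d Hd].
      exists d. split. apply cond_pos. intros y Hy.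
      unfold rt. destruct (Rle_dec 0 0) as [_|]; [|lra]. destruct Rle_dec.
      + rewrite Rminus_diag, Rabs_R0. auto.
      + assert (Hb : ball 0 d y) by (apply ballR; auto).
        specialize (Hd y Hb ltac:(lra)). exact (proj1 (ballR _ _ _) Hd).
    - apply (continuous_ext_loc _ rho).
      + exists (mkposreal _ Hgt). intros y Hy.
        pose proof (proj1 (ballR _ _ _) Hy) as Hy1. simpl in Hy1. apply Rabs_lt_between in Hy1.
        unfold rt. destruct Rle_dec; auto. lra.
      + eapply sol_rho_cont; [exact Hsol| lra]. }
  assert (HD := D_RInt rt (-1) T 0 t Hc ltac:(lra) ltac:(lra)).
  assert (E : rt t = rho t) by (unfold rt; destruct Rle_dec; [lra|auto]).
  rewrite E in HD. apply (is_derive_ext_loc (fun x => RInt rt 0 x)); auto.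
  exists (mkposreal _ (proj1 Ht)). intros y Hy.
  pose proof (proj1 (ballR _ _ _) Hy) as Hy1. simpl in Hy1. apply Rabs_lt_between in Hy1.
  apply RInt_ext. intros z Hz. rewrite Rmin_left, Rmax_right in Hz by lra.
  unfold rt. destruct Rle_dec; auto. lra.
Qed.

Lemma dR_minus (f g : R -> R) x df dg : is_derive f x df -> is_derive g x dg ->
  is_derive (fun y => f y - g y) x (df - dg).
Proof. intros. apply (is_derive_minus (K:=R_AbsRing) (V:=R_NormedModule) f g x df dg); auto. Qed.
Lemma dR_plus (f g : R -> R) x df dg : is_derive f x df -> is_derive g x dg ->
  is_derive (fun y => f y + g y) x (df + dg).
Proof. intros. apply (is_derive_plus (K:=R_AbsRing) (V:=R_NormedModule) f g x df dg); auto. Qed.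
Lemma dR_opp (f : R -> R) x df : is_derive f x df -> is_derive (fun y => - f y) x (- df).
Proof. intros. apply (is_derive_opp (K:=R_AbsRing) (V:=R_NormedModule) f x df); auto. Qed.
Lemma dR_id x : is_derive (fun y : R => y) x 1.
Proof. apply (is_derive_id (K:=R_AbsRing)). Qed.
Lemma dR_const (c : R) x : is_derive (fun _ : R => c) x 0.
Proof. apply (is_derive_const (K:=R_AbsRing) (V:=R_NormedModule)). Qed.
Lemma dR_ln (f : R -> R) x df : is_derive f x df -> 0 < f x -> is_derive (fun y => ln (f y)) x (df * / f x).
Proof. intros H Hp. apply (is_derive_comp ln f x (/ f x) df); auto. apply is_derive_ln; auto. Qed.

Lemma exp_le a b : a <= b -> exp a <= exp b.
Proof. intros H. destruct (Req_dec a b). subst; lra. left; apply exp_increasing; lra. Qed.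

Lemma sumR_split_le f n i A : (forall j, (j < n)%nat -> f j <= A) -> 0 <= A -> (i < n)%nat ->
  sumR f n - f i <= INR n * A.
Proof.
  induction n; intros H HA Hi; [lia|]. simpl sumR. rewrite S_INR.
  destruct (Nat.eq_dec i n) as [->|Hne].
  - assert (sumR f n <= INR n * A) by (rewrite <- sumR_const; apply sumR_le; intros; apply H; lia). lra.
  - assert (sumR f n - f i <= INR n * A) by (apply IHn; [intros; apply H; lia| auto| lia]).
    assert (f n <= A) by (apply H; lia). lra.
Qed.

Lemma alg1 Ls li r c cb nA k : li <= -1 -> 0 < r -> 0 <= c <= k -> 0 < cb -> Ls - li <= nA ->
  0 <= (- r * Ls) * / r - (- (- li ^ 2 + c * (r - cb))) * / (- li) + (nA + k * cb).
Proof.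
  intros Hli Hr Hc Hcb HL.
  replace ((- r * Ls) * / r) with (- Ls) by (field; lra).
  set (mu := - li). assert (Hmu : 1 <= mu) by (unfold mu; lra).
  replace (- (- li ^ 2 + c * (r - cb)) * / mu) with (mu - c * r * / mu + c * cb * / mu)
    by (unfold mu; field; lra).
  assert (0 < / mu) by (apply Rinv_0_lt_compat; lra).
  assert (/ mu <= 1) by (rewrite <- Rinv_1; apply Rinv_le_contravar; lra).
  assert (0 <= c * r * / mu) by (apply Rmult_le_pos; [apply Rmult_le_pos|]; lra).
  assert (c * cb * / mu <= c * cb) by (rewrite <- (Rmult_1_r (c * cb)) at 2; apply Rmult_le_compat_l; nra).
  assert (c * cb <= k * cb) by nra.
  unfold mu in *. lra.
Qed.

Lemma lower_bound (n : nat) (k cb tB s0 M K0 A : R) (lam : nat -> R -> R) (rho I : R -> R) (i : nat) :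
  (1 <= n)%nat -> 0 < k -> 0 < cb -> 0 < s0 < tB -> 0 <= K0 -> 0 <= A -> (i < n)%nat ->
  (forall t, 0 < t < tB -> is_derive (lam i) t (- (lam i t) ^ 2 + k / INR n * (rho t - cb))) ->
  (forall t, 0 < t < tB -> is_derive rho t (- rho t * sumR (fun j => lam j t) n)) ->
  (forall t, 0 < t < tB -> 0 < rho t) ->
  (forall t, 0 < t < tB -> is_derive I t (rho t)) ->
  (forall t, 0 < t < tB -> I t <= M) ->
  (forall tau t, s0 <= tau <= t -> t < tB -> lam i t <= lam i tau + K0) ->
  (forall j t, (j < n)%nat -> s0 <= t < tB -> lam j t <= A) ->
  exists Bi, forall t, s0 <= t < tB -> - Bi <= lam i t.
Proof.
  intros Hn Hk Hcb Hs0 HK0 HA Hi Hdl Hdr Hrp HdI HIM Hup HA2.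
  assert (HnR : 1 <= INR n) by (apply (le_INR 1); lia).
  set (c := k / INR n).
  assert (Hc : 0 <= c <= k).
  { split. apply Rdiv_le_0_compat; lra. unfold c, Rdiv. rewrite <- (Rmult_1_r k) at 2.
    apply Rmult_le_compat_l. lra. rewrite <- Rinv_1. apply Rinv_le_contravar; lra. }
  apply NNPP. intros Hno.
  assert (Hbig : forall B, exists t, s0 <= t < tB /\ lam i t < - B).
  { intros B. apply NNPP. intros H1. apply Hno. exists B. intros t Ht.
    apply Rnot_lt_le. intros H2. apply H1. exists t. auto. }
  set (B1 := 1 + k * cb).
  assert (HB1 : 1 <= B1) by (unfold B1; nra).
  destruct (Hbig (K0 + B1)) as [tau1 [Htau1 Hl1]].
  assert (Hneg : forall t, tau1 <= t < tB -> lam i t < - B1).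
  { intros t Ht. pose proof (Hup tau1 t ltac:(lra) ltac:(lra)). lra. }
  set (v := fun x => / lam i x).
  assert (Hvd : forall x, tau1 < x < tB -> is_derive (fun y => v y - 2 * y) x
     (- (- (lam i x) ^ 2 + c * (rho x - cb)) / (lam i x) ^ 2 - 2 * 1)).
  { intros x Hx. apply dR_minus. apply is_derive_inv. apply Hdl; lra.
    pose proof (Hneg x ltac:(lra)). lra.
    apply (is_derive_scal (fun y => y) x 2 1). apply dR_id. }
  assert (Hvmono : forall s t, tau1 < s -> s <= t -> t < tB -> v t - v s <= 2 * (t - s)).
  { intros s t H1 H2 H3.
    assert (v t - 2 * t <= v s - 2 * s); [|lra].
    apply (mono_down (fun y => v y - 2 * y) _ tau1 tB s t Hvd); auto.
    intros x Hx. pose proof (Hneg x ltac:(lra)) as Hl. pose proof (Hrp x ltac:(lra)).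
    assert (Hsq : 0 < lam i x ^ 2) by nra.
    assert (- (- lam i x ^ 2 + c * (rho x - cb)) <= 2 * lam i x ^ 2).
    { assert (0 <= c * rho x) by nra. assert (c * cb <= B1) by (unfold B1; nra).
      assert (B1 <= lam i x ^ 2) by nra. nra. }
    assert (- (- lam i x ^ 2 + c * (rho x - cb)) / lam i x ^ 2 <= 2).
    { unfold Rdiv. apply (Rmult_le_reg_r (lam i x ^ 2)); auto.
      rewrite Rmult_assoc, Rinv_l by lra. lra. }
    lra. }
  assert (Hv : forall s, tau1 < s < tB -> - lam i s >= / (2 * (tB - s))).
  { intros s Hs.
    assert (Hvs : - v s <= 2 * (tB - s)).
    { apply (small_le' _ _ 1). intros m.
      destruct (Hbig (K0 + 2 ^ m)) as [tau [Htau Hlt]].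
      set (t := Rmax s tau).
      assert (Ht : s <= t < tB /\ tau <= t) by (unfold t; split; [split|]; [apply Rmax_l| apply Rmax_lub_lt; lra| apply Rmax_r]).
      assert (Hlt2 : lam i t < - 2 ^ m) by (pose proof (Hup tau t ltac:(lra) ltac:(lra)); lra).
      pose proof (pow2_pos m).
      assert (- v t <= 1 / 2 ^ m).
      { unfold v. assert (Hlt0 : lam i t < 0) by lra.
        replace (- / lam i t) with (/ (- lam i t)) by (field; lra).
        unfold Rdiv. rewrite Rmult_1_l. left. apply Rinv_lt_contravar; nra. }
      pose proof (Hvmono s t ltac:(lra) ltac:(lra) ltac:(lra)). lra. }
    pose proof (Hneg s ltac:(lra)) as Hl.
    assert (E : v s * lam i s = 1) by (unfold v; field; lra).
    assert (1 <= 2 * (tB - s) * (- lam i s)) by nra.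
    apply Rle_ge. apply (Rmult_le_reg_l (2 * (tB - s))). lra.
    rewrite Rinv_r by lra. lra. }
  set (Kq := INR n * A + k * cb).
  assert (HKq : 0 <= Kq) by (unfold Kq; nra).
  set (q := fun x => ln (rho x) - ln (- lam i x) + Kq * x).
  assert (Hqd : forall x, tau1 < x < tB -> is_derive q x
     ((- rho x * sumR (fun j => lam j x) n) * / rho x - (- (- (lam i x) ^ 2 + c * (rho x - cb))) * / (- lam i x) + Kq * 1)).
  { intros x Hx. pose proof (Hneg x ltac:(lra)). apply dR_plus. apply dR_minus.
    apply dR_ln. apply Hdr; lra. apply Hrp; lra.
    apply (dR_ln (fun y => - lam i y)). apply (dR_opp (lam i)). apply Hdl; lra. lra.
    apply (is_derive_scal (fun y => y) x Kq 1). apply dR_id. }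
  set (s1 := (tau1 + tB) / 2).
  assert (Hq : forall t, s1 <= t < tB -> q s1 <= q t).
  { intros t Ht. apply (mono_up q _ tau1 tB s1 t Hqd); try (unfold s1 in *; lra).
    intros x Hx. rewrite Rmult_1_r. apply alg1; auto. pose proof (Hneg x ltac:(lra)); lra.
    apply Hrp; lra.
    apply (sumR_split_le (fun j => lam j x) n i A); auto. intros j Hj. apply HA2; auto. lra. }
  set (c0 := exp (q s1 - Kq * tB)).
  assert (Hc0 : 0 < c0) by apply exp_pos.
  assert (Hrl : forall t, s1 <= t < tB -> c0 / (2 * (tB - t)) <= rho t).
  { intros t Ht. pose proof (Hq t Ht) as Hq1. unfold q in Hq1.
    pose proof (Hneg t ltac:(unfold s1 in *; lra)) as Hl.
    assert (Hr : 0 < rho t) by (apply Hrp; unfold s1 in *; lra).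
    assert (ln (rho t) >= (q s1 - Kq * tB) + ln (- lam i t)).
    { assert (Kq * t <= Kq * tB) by (apply Rmult_le_compat_l; lra). unfold q in *. lra. }
    assert (rho t >= c0 * (- lam i t)).
    { rewrite <- (exp_ln (rho t)) by auto. rewrite <- (exp_ln (- lam i t)) by lra.
      unfold c0. rewrite <- exp_plus. apply Rle_ge, exp_le. lra. }
    pose proof (Hv t ltac:(unfold s1 in *; lra)).
    assert (c0 * (- lam i t) >= c0 * / (2 * (tB - t))) by (apply Rmult_ge_compat_l; lra).
    unfold Rdiv. lra. }
  set (Gf := fun x => I x + c0 / 2 * ln (tB - x)).
  assert (HGd : forall x, s1 < x < tB -> is_derive Gf x (rho x + c0 / 2 * ((0 - 1) * / (tB - x)))).
  { intros x Hx. apply dR_plus. apply HdI. unfold s1 in *; lra.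
    apply (is_derive_scal (fun y => ln (tB - y)) x (c0 / 2)). apply dR_ln.
    apply dR_minus. apply dR_const. apply dR_id. lra. }
  set (s2 := (s1 + tB) / 2).
  assert (HG : forall t, s2 <= t < tB -> Gf s2 <= Gf t).
  { intros t Ht. apply (mono_up Gf _ s1 tB s2 t HGd); try (unfold s2 in *; lra).
    intros x Hx. pose proof (Hrl x ltac:(lra)).
    replace (c0 / 2 * ((0 - 1) * / (tB - x))) with (- (c0 / (2 * (tB - x)))) by (field; lra). lra. }
  set (d := Rmin ((tB - s2) / 2) (exp (ln (tB - s2) - 2 * (M - I s2 + 1) / c0))).
  assert (Hd : 0 < d) by (apply Rmin_glb_lt; [unfold s2, s1 in *; lra| apply exp_pos]).
  assert (Hd2 : d <= (tB - s2) / 2) by apply Rmin_l.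
  assert (Hd3 : ln d <= ln (tB - s2) - 2 * (M - I s2 + 1) / c0).
  { rewrite <- (ln_exp (ln (tB - s2) - 2 * (M - I s2 + 1) / c0)). apply ln_le; auto. apply Rmin_r. }
  set (t := tB - d).
  assert (Ht : s2 <= t < tB) by (unfold t, s2, s1 in *; lra).
  pose proof (HG t Ht) as HG1. unfold Gf in HG1.
  replace (tB - t) with d in HG1 by (unfold t; ring).
  assert (HIt : I t <= M) by (apply HIM; unfold s2, s1 in *; lra).
  assert (c0 / 2 * ln d <= c0 / 2 * ln (tB - s2) - (M - I s2 + 1)).
  { replace (c0 / 2 * ln (tB - s2) - (M - I s2 + 1)) with (c0 / 2 * (ln (tB - s2) - 2 * (M - I s2 + 1) / c0)) by (field; lra).
    apply Rmult_le_compat_l; lra. }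
  lra.
Qed.

Lemma fin_bound (P : nat -> R -> Prop) n :
  (forall i B B', B <= B' -> P i B -> P i B') -> (forall i, (i < n)%nat -> exists B, P i B) ->
  exists B, 0 <= B /\ forall i, (i < n)%nat -> P i B.
Proof.
  intros Hm. induction n; intros H.
  - exists 0. split. lra. intros; lia.
  - destruct IHn as [B [HB HP]]. intros; apply H; lia.
    destruct (H n ltac:(lia)) as [Bn HBn].
    exists (Rmax B Bn). split. eapply Rle_trans; [exact HB| apply Rmax_l].
    intros i Hi. destruct (Nat.eq_dec i n) as [->|Hne].
    + apply (Hm n Bn). apply Rmax_r. auto.
    + apply (Hm i B). apply Rmax_l. apply HP; lia.
Qed.

Theorem proposition2p5 (n : nat) (k cb rho0 tB : R) (lam0 : nat -> R)
    (lam : nat -> R -> R) (rho : R -> R) :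
  (2 <= n)%nat -> 0 < k -> 0 < cb -> 0 < rho0 ->
  (forall i, (S i < n)%nat -> lam0 i <= lam0 (S i)) ->
  0 < tB ->
  maximal_sol n k cb rho0 lam0 tB lam rho ->
  filterlim (fun t => RInt rho 0 t) (at_left tB) (Rbar_locally p_infty).
Proof.
  intros Hn Hk Hcb Hr0 _ HtB Hmax.
  pose proof Hmax as [Hsol _].
  set (I := fun x => RInt rho 0 x).
  assert (Hrp : forall t, 0 < t < tB -> 0 < rho t) by (apply (rho_pos n k cb rho0 lam0 tB lam rho); auto).
  assert (HdI : forall t, 0 < t < tB -> is_derive I t (rho t)) by (apply (I_deriv n k cb rho0 lam0 tB lam rho); auto).
  assert (HImono : forall a b, 0 < a -> a <= b -> b < tB -> I a <= I b).
  { intros a b H1 H2 H3. apply (mono_up I rho 0 tB a b); auto. intros; left; apply Hrp; auto. }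
  destruct (classic (forall M, exists d, 0 < d /\ forall t, tB - d < t < tB -> M < I t)) as [Hyes|Hno].
  { intros P [M HP]. destruct (Hyes M) as [d [Hd Hd']].
    exists (mkposreal d Hd). intros y Hy Hy'. apply HP. apply Hd'.
    pose proof (proj1 (ballR _ _ _) Hy) as Hy1. simpl in Hy1. apply Rabs_lt_between in Hy1. lra. }
  exfalso.
  apply not_all_ex_not in Hno. destruct Hno as [M HM].
  assert (HIM : forall t, 0 < t < tB -> I t <= M).
  { intros t Ht. apply Rnot_lt_le. intros Hlt. apply HM. exists (tB - t). split. lra.
    intros t' Ht'. eapply Rlt_le_trans. exact Hlt. apply HImono; lra. }
  pose proof Hsol as [_ [_ [_ [_ Hd]]]].
  assert (Hdl : forall i, (i < n)%nat -> forall t, 0 < t < tB ->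
     is_derive (lam i) t (- (lam i t) ^ 2 + k / INR n * (rho t - cb))) by (intros; apply Hd; auto).
  assert (Hdr : forall t, 0 < t < tB -> is_derive rho t (- rho t * sumR (fun j => lam j t) n)) by (intros; apply Hd; auto).
  assert (HnR : 1 <= INR n) by (apply (le_INR 1); lia).
  set (c := k / INR n). assert (Hc : 0 <= c) by (apply Rdiv_le_0_compat; lra).
  set (s0 := tB / 2). assert (Hs0 : 0 < s0 < tB) by (unfold s0; lra).
  set (K0 := c * (M - I s0)).
  assert (HK0 : 0 <= K0) by (unfold K0; assert (I s0 <= M) by (apply HIM; lra); nra).
  assert (Hup : forall i, (i < n)%nat -> forall tau t, s0 <= tau <= t -> t < tB -> lam i t <= lam i tau + K0).
  { intros i Hi tau t H1 H2.
    set (w := fun x => lam i x - c * I x).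
    assert (Hw : w t <= w tau).
    { apply (mono_down w (fun x => (- (lam i x) ^ 2 + c * (rho x - cb)) - c * rho x) 0 tB tau t); try lra.
      intros x Hx. apply dR_minus. apply Hdl; auto. apply is_derive_scal. apply HdI; auto.
      intros x Hx. assert (0 <= c * cb) by nra. assert (0 <= lam i x ^ 2) by (apply pow2_ge_0). nra. }
    unfold w in Hw. assert (I t <= M) by (apply HIM; lra). assert (I s0 <= I tau) by (apply HImono; lra).
    unfold K0. nra. }
  set (A := sumR (fun j => Rabs (lam j s0)) n + K0).
  assert (HA : 0 <= A) by (unfold A; assert (0 <= sumR (fun j => Rabs (lam j s0)) n) by (apply sumR_nonneg; intros; apply Rabs_pos); lra).
  assert (HA2 : forall j t, (j < n)%nat -> s0 <= t < tB -> lam j t <= A).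
  { intros j t Hj Ht. pose proof (Hup j Hj s0 t ltac:(lra) ltac:(lra)).
    assert (Rabs (lam j s0) <= sumR (fun j => Rabs (lam j s0)) n)
      by (apply (sumR_term (fun j => Rabs (lam j s0))); auto; intros; apply Rabs_pos).
    pose proof (RRle_abs (lam j s0)). unfold A. lra. }
  destruct (fin_bound (fun i B => forall t, s0 <= t < tB -> - B <= lam i t) n) as [Bl [HBl HBl']].
  { intros i B B' HBB HP t Ht. specialize (HP t Ht). lra. }
  { intros i Hi. apply (lower_bound n k cb tB s0 M K0 A lam rho I i); auto; try lia.
    all: try (intros; apply Hup; auto). }
  set (Bla := Rmax A Bl).
  assert (HBla : forall i t, (i < n)%nat -> s0 <= t < tB -> Rabs (lam i t) <= Bla).
  { intros i t Hi Ht. apply Rabs_le. pose proof (HBl' i Hi t Ht). pose proof (HA2 i t Hi Ht).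
    pose proof (Rmax_l A Bl). pose proof (Rmax_r A Bl). unfold Bla. lra. }
  assert (HBla0 : 0 <= Bla) by (unfold Bla; eapply Rle_trans; [exact HA| apply Rmax_l]).
  set (Rb := exp (ln (rho s0) + INR n * Bla * tB)).
  assert (Hrb : forall t, s0 <= t < tB -> rho t <= Rb).
  { intros t Ht.
    destruct (mv (fun x => ln (rho x)) (fun x => (- rho x * sumR (fun j => lam j x) n) * / rho x) 0 tB s0 t)
      as [x [Hx E]]; try lra.
    { intros x Hx. apply dR_ln. apply Hdr; auto. apply Hrp; auto. }
    assert (Hrx : 0 < rho x) by (apply Hrp; lra).
    replace ((- rho x * sumR (fun j => lam j x) n) * / rho x) with (- sumR (fun j => lam j x) n) in E by (field; lra).
    assert (Hs : Rabs (sumR (fun j => lam j x) n) <= INR n * Bla) by (apply sumR_absle; intros; apply HBla; auto; lra).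
    apply Rabs_le_between in Hs.
    assert (- sumR (fun j => lam j x) n * (t - s0) <= INR n * Bla * tB).
    { assert (0 <= INR n * Bla) by nra. nra. }
    rewrite <- (exp_ln (rho t)) by (apply Hrp; lra). unfold Rb. apply exp_le. lra. }
  set (B0 := Rmax Bla Rb).
  apply (ext_contra n k cb rho0 lam0 tB lam rho s0 B0); auto.
  { unfold B0. eapply Rle_trans; [exact HBla0| apply Rmax_l]. }
  intros t Ht. split.
  - intros i Hi. eapply Rle_trans. apply HBla; auto. apply Rmax_l.
  - rewrite Rabs_right by (left; apply Hrp; lra). eapply Rle_trans. apply Hrb; auto. apply Rmax_r.
Qed.
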